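(* Let $n\ge 3$. Every instance of the $n^2$-puzzle is solvable: for the $n\times n$ grid graph $G=(V,E)$ with a set $R$ of $n^2$ robots and any bijections $x_I,x_G:R\to V$, there exists a collision-free set of feasible paths taking each robot $r$ from $x_I(r)$ to $x_G(r)$.
   Context: Let $\mathbb Z^+=\mathbb N\cup\{0\}$. A path for robot $r_i$ is a map $p_i:\mathbb Z^+\to V$; it is feasible if $p_i(0)=x_I(r_i)$, there is a smallest $k_i^{\min}$ with $p_i(k)=x_G(r_i)$ for all $k\ge k_i^{\min}$, and for $0\le k<k_i^{\min}$ either $(p_i(k),p_i(k+1))\in E$ or $p_i(k)=p_i(k+1)$. Two paths $p_i,p_j$ ($i\ne j$) collide if for some $k$, $p_i(k)=p_j(k)$ or $(p_i(k),p_i(k+1))=(p_j(k+1),p_j(k))$. Multiple robots may move in the same time step. *)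

(* Defs.v *)
From mathcomp Require Import all_boot.
Set Implicit Arguments. Unset Strict Implicit. Unset Printing Implicit Defensive.

Definition cell (n : nat) : finType := ('I_n * 'I_n)%type.

Definition grid_edge (n : nat) (u v : cell n) : bool :=
  ((u.1 : nat) == v.1) && (((u.2 : nat) == (v.2).+1) || ((v.2 : nat) == (u.2).+1))
  || ((u.2 : nat) == v.2) && (((u.1 : nat) == (v.1).+1) || ((v.1 : nat) == (u.1).+1)).

(* A path is a map from time steps (nat = Z^+) to vertices. *)
Definition path_of (V : Type) := nat -> V.

(* Feasibility of a path p from xI to xG w.r.t. edge relation E:
   p 0 = xI, there is a time kmin after which p stays at xG, and before
   kmin every step traverses an edge or waits. (Existence of some such kmin
   is equivalent to existence of a smallest one.) *)
Definition feasible (V : Type) (E : V -> V -> bool) (xI xG : V) (p : nat -> V) :=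
  p 0 = xI /\
  exists kmin : nat,
    (forall k, kmin <= k -> p k = xG) /\
    (forall k, k < kmin -> E (p k) (p k.+1) \/ p k = p k.+1).

Definition collide (V : Type) (pi pj : nat -> V) :=
  exists k : nat, pi k = pj k \/ (pi k, pi k.+1) = (pj k.+1, pj k).

(* Main.v *)
Require Import Defs.
From mathcomp Require Import all_boot all_fingroup.
From mathcomp Require Import zify.
Set Implicit Arguments. Unset Strict Implicit. Unset Printing Implicit Defensive.
Local Open Scope group_scope.

Ltac simp := rewrite ?eqxx /=; repeat match goal with H : is_true (?x != ?y) |- _ =>
  first [rewrite (negbTE H) /= | rewrite [y == x]eq_sym (negbTE H) /=] end; rewrite ?eqxx /=.

Section Grid.
Variable n : nat.
Local Notation ge := (@grid_edge n).
Definition legalb (s : {perm cell n}) :=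
  [forall x, (s x == x) || ge x (s x)] &&
  [forall x, (s (s x) == x) ==> (s x == x)].
Definition L := [set s : {perm cell n} | legalb s].
Definition rot (a b c d : cell n) : {perm cell n} := tperm a b * tperm a c * tperm a d.

Lemma grid_edge_sym u v : ge u v = ge v u.
Proof. rewrite /grid_edge; apply/idP/idP; lia. Qed.

Lemma grid_edge_irr u : ge u u = false.
Proof. rewrite /grid_edge; apply/negbTE; lia. Qed.

Lemma tpE (x y z : cell n) : tperm x y z = if z == x then y else if z == y then x else z.
Proof. case: tpermP => [->|->|zx zy]; rewrite ?eqxx //; first by case: (eqVneq y x).
by case: (eqVneq z x); case: (eqVneq z y). Qed.

Lemma rot_legal a b c d : uniq [:: a; b; c; d] ->
  ge a b -> ge b c -> ge c d -> ge d a ->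
  rot a b c d \in L.
Proof.
rewrite /= !inE !negb_or /= andbT. case/and3P => /and3P[hab hac had] /andP[hbc hbd] hcd.
move=> eab ebc ecd eda.
have ev : forall x, rot a b c d x =
   if x == a then b else if x == b then c else if x == c then d else if x == d then a else x.
  move=> x; rewrite /rot !permM !tpE.
  have [?|xa] := eqVneq x a; first by subst x; simp.
  have [?|xb] := eqVneq x b; first by subst x; simp.
  have [?|xc] := eqVneq x c; first by subst x; simp.
  have [?|xd] := eqVneq x d; first by subst x; simp.
  by simp.
apply/andP; split; apply/forallP => x; rewrite !ev.
  have [?|xa] := eqVneq x a; first by subst x; simp; rewrite ?eab ?ebc ?ecd ?eda ?orbT.
  have [?|xb] := eqVneq x b; first by subst x; simp; rewrite ?eab ?ebc ?ecd ?eda ?orbT.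
  have [?|xc] := eqVneq x c; first by subst x; simp; rewrite ?eab ?ebc ?ecd ?eda ?orbT.
  have [?|xd] := eqVneq x d; first by subst x; simp; rewrite ?eab ?ebc ?ecd ?eda ?orbT.
  by simp.
have [?|xa] := eqVneq x a; first by subst x; simp.
have [?|xb] := eqVneq x b; first by subst x; simp.
have [?|xc] := eqVneq x c; first by subst x; simp.
have [?|xd] := eqVneq x d; first by subst x; simp.
by simp.
Qed.
End Grid.

Notation o k := (@Ordinal 9 k isT).
Ltac ord9 i := case: i => [[|[|[|[|[|[|[|[|[|//]]]]]]]]] ?].
Definition adj9 (i j : 'I_9) : bool :=
  ((i %/ 3 == j %/ 3) && ((i %% 3 == (j %% 3).+1) || (j %% 3 == (i %% 3).+1))) ||
  ((i %% 3 == j %% 3) && ((i %/ 3 == (j %/ 3).+1) || (j %/ 3 == (i %/ 3).+1))).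

Definition tp (a b k : nat) := if k == a then b else if k == b then a else k.
Lemma valtp m (a b z : 'I_m) : val (tperm a b z) = tp a b z.
Proof.
rewrite /tp; case: tpermP => [->|->|zx zy]; rewrite ?eqxx //.
  by case: (eqVneq (val b) (val a)) => // /val_inj ->.
by rewrite (introF eqP (fun h => zx (val_inj h))) (introF eqP (fun h => zy (val_inj h))).
Qed.

Section Block.
Variable n : nat.
Variable f : 'I_9 -> cell n.
Hypothesis fi : injective f.
Hypothesis he : forall i j, adj9 i j -> @grid_edge n (f i) (f j).

Lemma tfix x a b : (forall i, (f i == x) = false) -> tperm (f a) (f b) x = x.
Proof. by move=> hx; apply: tpermD; apply/negbT; apply: hx. Qed.
Lemma s00_in : rot (f (o 0)) (f (o 1)) (f (o 4)) (f (o 3)) \in <<L n>>.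
Proof.
apply/mem_gen/rot_legal; last by apply: he.
  by rewrite /= !inE !(inj_eq fi).
all: by apply: he.
Qed.
Lemma s01_in : rot (f (o 1)) (f (o 2)) (f (o 5)) (f (o 4)) \in <<L n>>.
Proof.
apply/mem_gen/rot_legal; last by apply: he.
  by rewrite /= !inE !(inj_eq fi).
all: by apply: he.
Qed.
Lemma s10_in : rot (f (o 3)) (f (o 4)) (f (o 7)) (f (o 6)) \in <<L n>>.
Proof.
apply/mem_gen/rot_legal; last by apply: he.
  by rewrite /= !inE !(inj_eq fi).
all: by apply: he.
Qed.
Lemma s11_in : rot (f (o 4)) (f (o 5)) (f (o 8)) (f (o 7)) \in <<L n>>.
Proof.
apply/mem_gen/rot_legal; last by apply: he.
  by rewrite /= !inE !(inj_eq fi).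
all: by apply: he.
Qed.
Lemma w0 : tperm (f (o 0)) (f (o 1)) \in <<L n>>.
Proof.
have -> : tperm (f (o 0)) (f (o 1)) = (rot (f (o 1)) (f (o 2)) (f (o 5)) (f (o 4))) * (rot (f (o 1)) (f (o 2)) (f (o 5)) (f (o 4))) * (rot (f (o 1)) (f (o 2)) (f (o 5)) (f (o 4))) * (rot (f (o 3)) (f (o 4)) (f (o 7)) (f (o 6))) * (rot (f (o 3)) (f (o 4)) (f (o 7)) (f (o 6))) * (rot (f (o 3)) (f (o 4)) (f (o 7)) (f (o 6))) * (rot (f (o 1)) (f (o 2)) (f (o 5)) (f (o 4))) * (rot (f (o 0)) (f (o 1)) (f (o 4)) (f (o 3))) * (rot (f (o 3)) (f (o 4)) (f (o 7)) (f (o 6))).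
  apply/permP => x; rewrite /rot !permM.
  case: (pickP (fun i => f i == x)) => [i /eqP <- | hx]; last by rewrite !(tfix _ _ hx).
  rewrite -!(@inj_tperm _ _ f _ _ _ fi); congr f; apply/val_inj; rewrite !valtp.
  by ord9 i.
by repeat (apply: groupM; last by first [exact: s00_in | exact: s01_in | exact: s10_in | exact: s11_in]);
  first [exact: s00_in | exact: s01_in | exact: s10_in | exact: s11_in].
Qed.
Lemma w1 : tperm (f (o 1)) (f (o 2)) \in <<L n>>.
Proof.
have -> : tperm (f (o 1)) (f (o 2)) = (rot (f (o 1)) (f (o 2)) (f (o 5)) (f (o 4))) * (rot (f (o 0)) (f (o 1)) (f (o 4)) (f (o 3))) * (rot (f (o 4)) (f (o 5)) (f (o 8)) (f (o 7))) * (rot (f (o 4)) (f (o 5)) (f (o 8)) (f (o 7))) * (rot (f (o 4)) (f (o 5)) (f (o 8)) (f (o 7))) * (rot (f (o 0)) (f (o 1)) (f (o 4)) (f (o 3))) * (rot (f (o 0)) (f (o 1)) (f (o 4)) (f (o 3))) * (rot (f (o 0)) (f (o 1)) (f (o 4)) (f (o 3))) * (rot (f (o 4)) (f (o 5)) (f (o 8)) (f (o 7))).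
  apply/permP => x; rewrite /rot !permM.
  case: (pickP (fun i => f i == x)) => [i /eqP <- | hx]; last by rewrite !(tfix _ _ hx).
  rewrite -!(@inj_tperm _ _ f _ _ _ fi); congr f; apply/val_inj; rewrite !valtp.
  by ord9 i.
by repeat (apply: groupM; last by first [exact: s00_in | exact: s01_in | exact: s10_in | exact: s11_in]);
  first [exact: s00_in | exact: s01_in | exact: s10_in | exact: s11_in].
Qed.
Lemma w2 : tperm (f (o 3)) (f (o 4)) \in <<L n>>.
Proof.
have -> : tperm (f (o 3)) (f (o 4)) = (rot (f (o 0)) (f (o 1)) (f (o 4)) (f (o 3))) * (rot (f (o 1)) (f (o 2)) (f (o 5)) (f (o 4))) * (rot (f (o 1)) (f (o 2)) (f (o 5)) (f (o 4))) * (rot (f (o 1)) (f (o 2)) (f (o 5)) (f (o 4))) * (rot (f (o 3)) (f (o 4)) (f (o 7)) (f (o 6))) * (rot (f (o 1)) (f (o 2)) (f (o 5)) (f (o 4))) * (rot (f (o 3)) (f (o 4)) (f (o 7)) (f (o 6))) * (rot (f (o 3)) (f (o 4)) (f (o 7)) (f (o 6))) * (rot (f (o 3)) (f (o 4)) (f (o 7)) (f (o 6))) * (rot (f (o 0)) (f (o 1)) (f (o 4)) (f (o 3))) * (rot (f (o 0)) (f (o 1)) (f (o 4)) (f (o 3))).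
  apply/permP => x; rewrite /rot !permM.
  case: (pickP (fun i => f i == x)) => [i /eqP <- | hx]; last by rewrite !(tfix _ _ hx).
  rewrite -!(@inj_tperm _ _ f _ _ _ fi); congr f; apply/val_inj; rewrite !valtp.
  by ord9 i.
by repeat (apply: groupM; last by first [exact: s00_in | exact: s01_in | exact: s10_in | exact: s11_in]);
  first [exact: s00_in | exact: s01_in | exact: s10_in | exact: s11_in].
Qed.
Lemma w3 : tperm (f (o 4)) (f (o 5)) \in <<L n>>.
Proof.
have -> : tperm (f (o 4)) (f (o 5)) = (rot (f (o 0)) (f (o 1)) (f (o 4)) (f (o 3))) * (rot (f (o 0)) (f (o 1)) (f (o 4)) (f (o 3))) * (rot (f (o 4)) (f (o 5)) (f (o 8)) (f (o 7))) * (rot (f (o 1)) (f (o 2)) (f (o 5)) (f (o 4))) * (rot (f (o 0)) (f (o 1)) (f (o 4)) (f (o 3))) * (rot (f (o 4)) (f (o 5)) (f (o 8)) (f (o 7))) * (rot (f (o 4)) (f (o 5)) (f (o 8)) (f (o 7))) * (rot (f (o 4)) (f (o 5)) (f (o 8)) (f (o 7))) * (rot (f (o 1)) (f (o 2)) (f (o 5)) (f (o 4))) * (rot (f (o 1)) (f (o 2)) (f (o 5)) (f (o 4))) * (rot (f (o 0)) (f (o 1)) (f (o 4)) (f (o 3))).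
  apply/permP => x; rewrite /rot !permM.
  case: (pickP (fun i => f i == x)) => [i /eqP <- | hx]; last by rewrite !(tfix _ _ hx).
  rewrite -!(@inj_tperm _ _ f _ _ _ fi); congr f; apply/val_inj; rewrite !valtp.
  by ord9 i.
by repeat (apply: groupM; last by first [exact: s00_in | exact: s01_in | exact: s10_in | exact: s11_in]);
  first [exact: s00_in | exact: s01_in | exact: s10_in | exact: s11_in].
Qed.
Lemma w4 : tperm (f (o 6)) (f (o 7)) \in <<L n>>.
Proof.
have -> : tperm (f (o 6)) (f (o 7)) = (rot (f (o 0)) (f (o 1)) (f (o 4)) (f (o 3))) * (rot (f (o 3)) (f (o 4)) (f (o 7)) (f (o 6))) * (rot (f (o 4)) (f (o 5)) (f (o 8)) (f (o 7))) * (rot (f (o 0)) (f (o 1)) (f (o 4)) (f (o 3))) * (rot (f (o 0)) (f (o 1)) (f (o 4)) (f (o 3))) * (rot (f (o 0)) (f (o 1)) (f (o 4)) (f (o 3))) * (rot (f (o 4)) (f (o 5)) (f (o 8)) (f (o 7))) * (rot (f (o 4)) (f (o 5)) (f (o 8)) (f (o 7))) * (rot (f (o 4)) (f (o 5)) (f (o 8)) (f (o 7))).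
  apply/permP => x; rewrite /rot !permM.
  case: (pickP (fun i => f i == x)) => [i /eqP <- | hx]; last by rewrite !(tfix _ _ hx).
  rewrite -!(@inj_tperm _ _ f _ _ _ fi); congr f; apply/val_inj; rewrite !valtp.
  by ord9 i.
by repeat (apply: groupM; last by first [exact: s00_in | exact: s01_in | exact: s10_in | exact: s11_in]);
  first [exact: s00_in | exact: s01_in | exact: s10_in | exact: s11_in].
Qed.
Lemma w5 : tperm (f (o 7)) (f (o 8)) \in <<L n>>.
Proof.
have -> : tperm (f (o 7)) (f (o 8)) = (rot (f (o 1)) (f (o 2)) (f (o 5)) (f (o 4))) * (rot (f (o 3)) (f (o 4)) (f (o 7)) (f (o 6))) * (rot (f (o 3)) (f (o 4)) (f (o 7)) (f (o 6))) * (rot (f (o 3)) (f (o 4)) (f (o 7)) (f (o 6))) * (rot (f (o 1)) (f (o 2)) (f (o 5)) (f (o 4))) * (rot (f (o 1)) (f (o 2)) (f (o 5)) (f (o 4))) * (rot (f (o 1)) (f (o 2)) (f (o 5)) (f (o 4))) * (rot (f (o 3)) (f (o 4)) (f (o 7)) (f (o 6))) * (rot (f (o 4)) (f (o 5)) (f (o 8)) (f (o 7))).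
  apply/permP => x; rewrite /rot !permM.
  case: (pickP (fun i => f i == x)) => [i /eqP <- | hx]; last by rewrite !(tfix _ _ hx).
  rewrite -!(@inj_tperm _ _ f _ _ _ fi); congr f; apply/val_inj; rewrite !valtp.
  by ord9 i.
by repeat (apply: groupM; last by first [exact: s00_in | exact: s01_in | exact: s10_in | exact: s11_in]);
  first [exact: s00_in | exact: s01_in | exact: s10_in | exact: s11_in].
Qed.
Lemma w6 : tperm (f (o 0)) (f (o 3)) \in <<L n>>.
Proof.
have -> : tperm (f (o 0)) (f (o 3)) = (rot (f (o 0)) (f (o 1)) (f (o 4)) (f (o 3))) * (rot (f (o 3)) (f (o 4)) (f (o 7)) (f (o 6))) * (rot (f (o 1)) (f (o 2)) (f (o 5)) (f (o 4))) * (rot (f (o 1)) (f (o 2)) (f (o 5)) (f (o 4))) * (rot (f (o 1)) (f (o 2)) (f (o 5)) (f (o 4))) * (rot (f (o 3)) (f (o 4)) (f (o 7)) (f (o 6))) * (rot (f (o 3)) (f (o 4)) (f (o 7)) (f (o 6))) * (rot (f (o 3)) (f (o 4)) (f (o 7)) (f (o 6))) * (rot (f (o 1)) (f (o 2)) (f (o 5)) (f (o 4))).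
  apply/permP => x; rewrite /rot !permM.
  case: (pickP (fun i => f i == x)) => [i /eqP <- | hx]; last by rewrite !(tfix _ _ hx).
  rewrite -!(@inj_tperm _ _ f _ _ _ fi); congr f; apply/val_inj; rewrite !valtp.
  by ord9 i.
by repeat (apply: groupM; last by first [exact: s00_in | exact: s01_in | exact: s10_in | exact: s11_in]);
  first [exact: s00_in | exact: s01_in | exact: s10_in | exact: s11_in].
Qed.
Lemma w7 : tperm (f (o 3)) (f (o 6)) \in <<L n>>.
Proof.
have -> : tperm (f (o 3)) (f (o 6)) = (rot (f (o 0)) (f (o 1)) (f (o 4)) (f (o 3))) * (rot (f (o 0)) (f (o 1)) (f (o 4)) (f (o 3))) * (rot (f (o 0)) (f (o 1)) (f (o 4)) (f (o 3))) * (rot (f (o 4)) (f (o 5)) (f (o 8)) (f (o 7))) * (rot (f (o 4)) (f (o 5)) (f (o 8)) (f (o 7))) * (rot (f (o 4)) (f (o 5)) (f (o 8)) (f (o 7))) * (rot (f (o 0)) (f (o 1)) (f (o 4)) (f (o 3))) * (rot (f (o 3)) (f (o 4)) (f (o 7)) (f (o 6))) * (rot (f (o 4)) (f (o 5)) (f (o 8)) (f (o 7))).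
  apply/permP => x; rewrite /rot !permM.
  case: (pickP (fun i => f i == x)) => [i /eqP <- | hx]; last by rewrite !(tfix _ _ hx).
  rewrite -!(@inj_tperm _ _ f _ _ _ fi); congr f; apply/val_inj; rewrite !valtp.
  by ord9 i.
by repeat (apply: groupM; last by first [exact: s00_in | exact: s01_in | exact: s10_in | exact: s11_in]);
  first [exact: s00_in | exact: s01_in | exact: s10_in | exact: s11_in].
Qed.
End Block.

Section Route.
Variable m : nat.
Local Notation N := m.+3.
Definition cellc (i j : nat) : cell N := (inord i, inord j).
Local Notation G := <<L N>>.

Section Inst.
Variables r0 c0 : nat.
Hypotheses (hr : r0 <= m) (hc : c0 <= m).
Definition fb (k : 'I_9) : cell N := cellc (r0 + k %/ 3) (c0 + k %% 3).

Lemma fb_inj : injective fb.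
Proof.
move=> i j; rewrite /fb /cellc => -[].
have hi := ltn_ord i; have hj := ltn_ord j.
move/(congr1 val) => e1 /(congr1 val) e2; apply/val_inj.
move: e1 e2; rewrite /= !inordK; try lia.
Qed.

Lemma fb_edge i j : adj9 i j -> @grid_edge N (fb i) (fb j).
Proof.
have hi := ltn_ord i; have hj := ltn_ord j.
rewrite /adj9 /grid_edge /fb /cellc /= !inordK; lia.
Qed.

Lemma hblock a b : a <= 2 -> b <= 1 ->
  tperm (cellc (r0 + a) (c0 + b)) (cellc (r0 + a) (c0 + b.+1)) \in G.
Proof.
have W0 := w0 fb_inj fb_edge; have W1 := w1 fb_inj fb_edge.
have W2 := w2 fb_inj fb_edge; have W3 := w3 fb_inj fb_edge.
have W4 := w4 fb_inj fb_edge; have W5 := w5 fb_inj fb_edge.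
by case: a => [|[|[|//]]]; case: b => [|[|//]].
Qed.

Lemma vblock a : a <= 1 -> c0 = 0 ->
  tperm (cellc (r0 + a) 0) (cellc (r0 + a.+1) 0) \in G.
Proof.
move=> ha c00.
have W6 := w6 fb_inj fb_edge; have W7 := w7 fb_inj fb_edge.
rewrite /fb c00 in W6 W7.
by case: a ha => [|[|//]].
Qed.
End Inst.

Lemma hedge i j : i <= m.+2 -> j.+1 <= m.+2 -> tperm (cellc i j) (cellc i j.+1) \in G.
Proof.
move=> hi hj.
have [r0 [a [hr ha ->]]] : exists r0 a, [/\ r0 <= m, a <= 2 & i = r0 + a].
  by exists (minn i m), (i - minn i m); split; lia.
have [c0 [b [hc hb ->]]] : exists c0 b, [/\ c0 <= m, b <= 1 & j = c0 + b].
  by exists (minn j m), (j - minn j m); split; lia.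
by rewrite -addnS; apply: hblock.
Qed.

Lemma vedge i : i.+1 <= m.+2 -> tperm (cellc i 0) (cellc i.+1 0) \in G.
Proof.
move=> hi.
have [r0 [a [hr ha ->]]] : exists r0 a, [/\ r0 <= m, a <= 1 & i = r0 + a].
  by exists (minn i m), (i - minn i m); split; lia.
by rewrite -addnS; apply: (@vblock r0 0).
Qed.

Lemma ttrans (x y z : cell N) : tperm x y \in G -> tperm y z \in G -> tperm x z \in G.
Proof.
move=> h1 h2.
have [e|xz] := eqVneq x z; first by subst z; rewrite tperm1 group1.
have [e|xy] := eqVneq x y; first by subst y.
have [e|yz] := eqVneq y z; first by subst z.
by rewrite -(tpermJ_tperm yz xz) groupJ // tpermC.
Qed.

Lemma row i j : i <= m.+2 -> j <= m.+2 -> tperm (cellc i j) (cellc i 0) \in G.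
Proof.
move=> hi; elim: j => [|j IH] hj; first by rewrite tperm1 group1.
apply: (@ttrans _ (cellc i j)); last by apply: IH; lia.
by rewrite tpermC; apply: hedge.
Qed.

Lemma col i : i <= m.+2 -> tperm (cellc i 0) (cellc 0 0) \in G.
Proof.
elim: i => [|i IH] hi; first by rewrite tperm1 group1.
apply: (@ttrans _ (cellc i 0)); last by apply: IH; lia.
by rewrite tpermC; apply: vedge.
Qed.

Lemma all_tperm (u v : cell N) : tperm u v \in G.
Proof.
have eo : forall w : cell N, tperm w (cellc 0 0) \in G.
  move=> w; have -> : w = cellc w.1 w.2 by case: w => a b; rewrite /cellc !inord_val.
  have h1 := ltn_ord w.1; have h2 := ltn_ord w.2.
  apply: (@ttrans _ (cellc w.1 0)); first by apply: row.
  by apply: col.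
by apply: (ttrans (eo u)); rewrite tpermC.
Qed.

Lemma all_in (s : {perm cell N}) : s \in G.
Proof.
case: (prod_tpermP s) => ts -> _; apply: group_prod => t _; exact: all_tperm.
Qed.

Theorem main_m (R : finType) (xI xG : R -> cell N) (bI : bijective xI) (bG : bijective xG) :
  exists p : R -> nat -> cell N,
    (forall r, feasible (@grid_edge N) (xI r) (xG r) (p r)) /\
    (forall ri rj, ri <> rj -> ~ collide (p ri) (p rj)).
Proof.
case: (bI) => xI' hI1 hI2.
have inj : injective (fun x => xG (xI' x)) by move=> x y /(bij_inj bG) /(can_inj hI2).
pose pi := perm inj.
have hpi : forall r, pi (xI r) = xG r by move=> r; rewrite permE /= hI1.
have /gen_prodgP [k [c cL epi]] : pi \in G := all_in pi.
pose g (i : nat) : {perm cell N} := oapp c 1 (insub i).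
have gL : forall i, g i \in L N.
  move=> i; rewrite /g; case: insub => [j|] /=; first exact: cL.
  by rewrite inE /legalb; apply/andP; split; apply/forallP=> x; rewrite !perm1 eqxx.
have g1 : forall t, k <= t -> g t = 1.
  by move=> t ht; rewrite /g; case: insubP => [j hj _|//] /=; lia.
pose P (t : nat) := \prod_(i < t) g i.
have PS : forall t, P t.+1 = P t * g t by move=> t; rewrite /P big_ord_recr.
have Pk0 : P k = pi.
  rewrite epi /P; apply: eq_bigr => i _; rewrite /g.
  by case: insubP => [j _ /val_inj ->|] //=; rewrite ltn_ord.
have Pk : forall t, k <= t -> P t = pi.
  have H : forall d, P (k + d) = pi.
    elim=> [|d IH]; first by rewrite addn0.
    by rewrite addnS PS IH g1 ?mulg1 //; lia.
  by move=> t ht; rewrite -(subnKC ht) H.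
exists (fun r t => P t (xI r)); split.
  move=> r; split; first by rewrite /P big_ord0 perm1.
  exists k; split; first by move=> t ht; rewrite Pk // hpi.
  move=> t _; rewrite PS permM.
  have := gL t; rewrite inE => /andP[/forallP/(_ (P t (xI r)))] h _.
  by case/orP: h => [/eqP ->|e]; [right|left].
move=> ri rj nr [t [e|e]].
  by move/perm_inj/(bij_inj bI): e.
case: e; rewrite !PS !permM => e1 e2.
have := gL t; rewrite inE => /andP[_ /forallP/(_ (P t (xI ri)))].
have e3 : g t (g t (P t (xI ri))) = P t (xI ri) by rewrite e2 -e1.
rewrite e3 eqxx /= => /eqP e4; rewrite e4 in e2.
by move/perm_inj/(bij_inj bI): e2.
Qed.
End Route.

Local Close Scope group_scope.
Theorem corollary1 (n : nat) (hn : 3 <= n) (R : finType)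
  (hR : #|R| = n ^ 2)
  (xI xG : R -> cell n) (bI : bijective xI) (bG : bijective xG) :
  exists p : R -> nat -> cell n,
    (forall r, feasible (@grid_edge n) (xI r) (xG r) (p r)) /\
    (forall ri rj, ri <> rj -> ~ collide (p ri) (p rj)).
Proof.
have [m e] : exists m, n = m.+3 by exists (n - 3)%N; lia.
subst n; exact: main_m.
Qed.
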